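(* There exists a countable, connected, locally finite graph $G$ with a vertex $v$ such that $G$ has 2-distinguishing density zero at $v$, but $G$ does not have 2-distinguishing density zero; in fact there is a vertex $v'$ of $G$ such that no 2-distinguishing coloring $l$ of $G$ satisfies $\delta_{v'}(l)=0$.
   Context: All graphs are simple with vertex set $V$; $d$ is the graph distance and $B_x(r)=\{y\in V: d(x,y)\le r\}$. A 2-coloring $l:V\to\{\text{blue},\text{red}\}$ is 2-distinguishing if the only automorphism $g$ of $G$ with $l(g(x))=l(x)$ for all $x$ is the identity. For $W\subseteq V$ and $x\in V$, $\delta_x(W):=\lim_{n\to\infty}\frac{|B_x(n)\cap W|}{|B_x(n)|}$ if the limit exists (finite/infinite $=0$, infinite/infinite undefined); if $\delta_x(W)$ exists for all $x$, $\delta(W):=\sup_x\delta_x(W)$. For a 2-coloring $l$ with color classes $V_{\text{blue}},V_{\text{red}}$: $\delta_x(l):=\min\{\delta_x(V_{\text{blue}}),\delta_x(V_{\text{red}})\}$, $\delta(l):=\min\{\delta(V_{\text{blue}}),\delta(V_{\text{red}})\}$. $G$ has 2-distinguishing density zero at $x$ if some 2-distinguishing coloring $l$ has $\delta_x(l)=0$, and has 2-distinguishing density zero if some 2-distinguishing coloring $l$ has $\delta(l)=0$. *)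

(* Defs.v *)
From Stdlib Require Import Reals List.
Open Scope R_scope.

Section Graphs.
Context {V : Type} (adj : V -> V -> Prop).

Definition simple_graph : Prop :=
  (forall x y, adj x y -> adj y x) /\ (forall x, ~ adj x x).

Definition countable_vertices : Prop :=
  exists f : V -> nat, forall x y, f x = f y -> x = y.

Inductive walk : nat -> V -> V -> Prop :=
| walk0 : forall x, walk 0 x x
| walkS : forall n x y z, walk n x y -> adj y z -> walk (S n) x z.

Definition connected : Prop := forall x y, exists n, walk n x y.

Definition locally_finite : Prop :=
  forall x, exists l : list V, forall y, adj x y -> In y l.

Definition ball (x : V) (r : nat) (y : V) : Prop :=
  exists k, (k <= r)%nat /\ walk k x y.

Definition automorphism (g : V -> V) : Prop :=
  (forall x y, g x = g y -> x = y) /\ (forall y, exists x, g x = y) /\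
  (forall x y, adj x y <-> adj (g x) (g y)).

Definition distinguishing (l : V -> bool) : Prop :=
  forall g, automorphism g -> (forall x, l (g x) = l x) -> forall x, g x = x.

End Graphs.

Definition is_card {V : Type} (P : V -> Prop) (k : nat) : Prop :=
  exists s : list V, NoDup s /\ (forall y, In y s <-> P y) /\ length s = k.

(* delta_x(W) exists and equals d (balls are finite here) *)
Definition density_at {V : Type} (adj : V -> V -> Prop) (x : V) (W : V -> Prop) (d : R) : Prop :=
  exists a b : nat -> nat,
    (forall n, is_card (ball adj x n) (b n)) /\
    (forall n, is_card (fun y => ball adj x n y /\ W y) (a n)) /\
    Un_cv (fun n => INR (a n) / INR (b n)) d.

Definition blue_class {V : Type} (l : V -> bool) : V -> Prop := fun y => l y = true.
Definition red_class {V : Type} (l : V -> bool) : V -> Prop := fun y => l y = false.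

Definition coloring_density_zero_at {V : Type} (adj : V -> V -> Prop) (x : V) (l : V -> bool) : Prop :=
  exists d1 d2, density_at adj x (blue_class l) d1 /\ density_at adj x (red_class l) d2 /\
    Rmin d1 d2 = 0.

Definition density {V : Type} (adj : V -> V -> Prop) (W : V -> Prop) (s : R) : Prop :=
  (forall x, exists d, density_at adj x W d) /\
  is_lub (fun r => exists x, density_at adj x W r) s.

Definition coloring_density_zero {V : Type} (adj : V -> V -> Prop) (l : V -> bool) : Prop :=
  exists s1 s2, density adj (blue_class l) s1 /\ density adj (red_class l) s2 /\ Rmin s1 s2 = 0.

Definition has_2dist_density_zero_at {V : Type} (adj : V -> V -> Prop) (x : V) : Prop :=
  exists l, distinguishing adj l /\ coloring_density_zero_at adj x l.

Definition has_2dist_density_zero {V : Type} (adj : V -> V -> Prop) : Prop :=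
  exists l, distinguishing adj l /\ coloring_density_zero adj l.

(* Main.v *)
Require Import Defs.
From Stdlib Require Import Reals List Lia Lra ZArith Arith Classical ClassicalEpsilon FinFun.
Import ListNotations.

Open Scope nat_scope.

Inductive vtx := Sp (z : Z) | Av (k : nat) (b : bool) | Bv (k : nat).

Fixpoint F (l : nat) : nat := match l with 0 => 0 | S l' => S l' * (F l' + 1) end.

Definition lay (k l : nat) : Prop := F l <= k < F (S l).

Definition gadj (x y : vtx) : Prop :=
  match x, y with
  | Sp z, Sp w => w = (z + 1)%Z \/ z = (w + 1)%Z
  | Sp z, Av k _ | Av k _, Sp z => exists l, lay k l /\ z = (Z.of_nat l + 1)%Z
  | Sp z, Bv k | Bv k, Sp z => exists l, lay k l /\ z = (- (Z.of_nat l + 1))%Z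
  | Av k _, Av k' _ => k' = S k \/ k = S k'
  | Bv k, Bv k' => k' = S k \/ k = S k'
  | _, _ => False
  end.

Lemma F_S l : F (S l) = S l * (F l + 1).
Proof. reflexivity. Qed.

Lemma F_step l : F l + 1 <= F (S l).
Proof. rewrite F_S. nia. Qed.

Lemma F_lt l l' : l < l' -> F l < F l'.
Proof.
  induction 1.
  - pose proof (F_step l); lia.
  - pose proof (F_step m); lia.
Qed.

Lemma F_le l l' : l <= l' -> F l <= F l'.
Proof. intros H. destruct (Nat.eq_dec l l'). subst; lia. pose proof (F_lt l l'); lia. Qed.

Lemma F_lt_inv l l' : F l < F l' -> l < l'.
Proof. intros H. destruct (le_lt_dec l' l) as [h|h]; auto. pose proof (F_le _ _ h). lia. Qed.

Lemma F_le_inv l l' : F l <= F l' -> l <= l'.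
Proof. intros H. destruct (le_lt_dec l l') as [h|h]; auto. pose proof (F_lt _ _ h). lia. Qed.

Lemma lay_exists k : exists l, lay k l.
Proof.
  assert (forall m, k < F m -> exists l, lay k l) as H.
  { induction m; simpl; intros h. lia.
    destruct (le_lt_dec (F m) k). exists m. unfold lay; simpl; lia. auto. }
  apply (H (S k)). pose proof (F_lt 0 (S k)). assert (forall n, n <= F n).
  { induction n; simpl; lia. } specialize (H1 (S k)). lia.
Qed.

Lemma lay_uniq k l l' : lay k l -> lay k l' -> l = l'.
Proof.
  unfold lay; intros [a b] [c d].
  pose proof (F_lt_inv l (S l')). pose proof (F_lt_inv l' (S l)). lia.
Qed.

Lemma lay_step k l l' : lay k l -> lay (S k) l' -> l' = l \/ l' = S l.
Proof.
  unfold lay; intros [a b] [c d].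
  pose proof (F_lt_inv l (S l')). pose proof (F_le_inv l' (S l)). lia.
Qed.

Lemma lay_lt k l n : lay k l -> k < F n -> l < n.
Proof. unfold lay; intros [a b] h. apply F_lt_inv. lia. Qed.

Lemma lay_first l : lay (F l) l.
Proof. unfold lay. pose proof (F_step l). lia. Qed.

Lemma lay_second l : 1 <= l -> lay (S (F l)) l.
Proof. unfold lay. intros. rewrite F_S. nia. Qed.

Lemma lay_0 : lay 0 0.
Proof. unfold lay; simpl; lia. Qed.

Lemma lay0_inv k : lay k 0 -> k = 0.
Proof. unfold lay; simpl; lia. Qed.

Lemma lay_top k l n : lay k l -> S l <= n -> k < F n.
Proof. unfold lay; intros [a b] h. pose proof (F_le _ _ h). lia. Qed.

Lemma gadj_sym x y : gadj x y -> gadj y x.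
Proof. destruct x, y; simpl; intros; try tauto; lia. Qed.

Lemma gadj_irr x : ~ gadj x x.
Proof. destruct x; simpl; lia. Qed.

Close Scope nat_scope.

Open Scope nat_scope.

Lemma walk_app {V} (adj : V -> V -> Prop) n m x y z :
  walk adj n x y -> walk adj m y z -> walk adj (n + m) x z.
Proof.
  intros H1 H2. induction H2. rewrite Nat.add_0_r; auto.
  rewrite Nat.add_succ_r. econstructor; eauto.
Qed.

Lemma walk1 {V} (adj : V -> V -> Prop) x y : adj x y -> walk adj 1 x y.
Proof. intros; econstructor; [constructor|auto]. Qed.

Lemma walk_sym {V} (adj : V -> V -> Prop) (Hs : forall x y, adj x y -> adj y x) n x y :
  walk adj n x y -> walk adj n y x.
Proof.
  induction 1. constructor.
  replace (S n) with (1 + n) by lia. eapply walk_app; [apply walk1; apply Hs; eauto| eauto].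
Qed.

Lemma spine_up z d : walk gadj d (Sp z) (Sp (z + Z.of_nat d)).
Proof.
  induction d. rewrite Z.add_0_r. constructor.
  econstructor. eauto. simpl. left. lia.
Qed.

Lemma spine_down z d : walk gadj d (Sp z) (Sp (z - Z.of_nat d)).
Proof.
  induction d. rewrite Z.sub_0_r. constructor.
  econstructor. eauto. simpl. right. lia.
Qed.

Lemma spine_walk z w : walk gadj (Z.abs_nat (w - z)) (Sp z) (Sp w).
Proof.
  destruct (Z.le_ge_cases z w).
  - pose proof (spine_up z (Z.abs_nat (w - z))). replace (z + Z.of_nat (Z.abs_nat (w - z)))%Z with w in H0 by lia. auto.
  - pose proof (spine_down z (Z.abs_nat (w - z))). replace (z - Z.of_nat (Z.abs_nat (w - z)))%Z with w in H0 by lia. auto.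
Qed.

Lemma reach0 x : exists n, walk gadj n (Sp 0) x.
Proof.
  destruct x.
  - eexists; apply spine_walk.
  - destruct (lay_exists k) as [l Hl]. eexists. eapply walk_app. apply spine_walk.
    apply walk1. simpl. exists l; split; eauto.
  - destruct (lay_exists k) as [l Hl]. eexists. eapply walk_app. apply spine_walk.
    apply walk1. simpl. exists l; split; eauto.
Qed.

Lemma g_connected : connected gadj.
Proof.
  intros x y. destruct (reach0 x) as [n Hn], (reach0 y) as [m Hm].
  exists (n + m). eapply walk_app. apply walk_sym. apply gadj_sym. eauto. auto.
Qed.

Lemma g_simple : simple_graph gadj.
Proof. split. apply gadj_sym. apply gadj_irr. Qed.

Definition zenc (z : Z) : nat := if (0 <=? z)%Z then 2 * Z.to_nat z else 2 * Z.to_nat (- z) - 1.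

Lemma zenc_inj z w : zenc z = zenc w -> z = w.
Proof.
  unfold zenc. destruct (Z.leb_spec 0 z), (Z.leb_spec 0 w); lia.
Qed.

Definition venc (x : vtx) : nat :=
  match x with
  | Sp z => 3 * zenc z
  | Av k b => 3 * (2 * k + (if b then 1 else 0)) + 1
  | Bv k => 3 * k + 2
  end.

Lemma g_countable : countable_vertices (V := vtx).
Proof.
  exists venc. intros [] []; simpl; intros H; try lia.
  - f_equal. apply zenc_inj. lia.
  - destruct b, b0; f_equal; lia.
  - f_equal; lia.
Qed.

Lemma g_locfin : locally_finite gadj.
Proof.
  intros [z|k b|k].
  - exists ([Sp (z+1); Sp (z-1)] ++ map (fun k => Av k true) (seq 0 (F (Z.abs_nat z)))
       ++ map (fun k => Av k false) (seq 0 (F (Z.abs_nat z))) ++ map Bv (seq 0 (F (Z.abs_nat z)))).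
    intros [w|k b|k]; simpl; intros H.
    + destruct H; subst; [left; auto| right; left; f_equal; lia].
    + destruct H as [l [Hl ->]]. right; right. apply in_or_app.
      assert (k < F (Z.abs_nat (Z.of_nat l + 1))). { apply (lay_top k l); auto; lia. }
      destruct b; [left|right; apply in_or_app; left]; apply in_map_iff; exists k; split; auto; apply in_seq; lia.
    + destruct H as [l [Hl ->]]. right; right. apply in_or_app. right. apply in_or_app. right.
      assert (k < F (Z.abs_nat (- (Z.of_nat l + 1)))). { apply (lay_top k l); auto; lia. }
      apply in_map_iff; exists k; split; auto; apply in_seq; lia.
  - exists ([Av (S k) true; Av (S k) false; Av (pred k) true; Av (pred k) false] ++
       map (fun i => Sp (Z.of_nat i + 1)) (seq 0 (S k))).
    intros [w|k' b'|k']; intros H; cbn [gadj] in H; try tauto.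
    + destruct H as [l [Hl ->]]. apply in_or_app; right. apply in_map_iff; exists l; split; auto. apply in_seq.
      assert (l <= F l). { clear. induction l; simpl; lia. } unfold lay in Hl. lia.
    + destruct H; subst; destruct b'; simpl; tauto.
  - exists ([Bv (S k); Bv (pred k)] ++
       map (fun i => Sp (- (Z.of_nat i + 1))) (seq 0 (S k))).
    intros [w|k' b'|k']; intros H; cbn [gadj] in H; try tauto.
    + destruct H as [l [Hl ->]]. apply in_or_app; right. apply in_map_iff; exists l; split; auto. apply in_seq.
      assert (l <= F l). { clear. induction l; simpl; lia. } unfold lay in Hl. lia.
    + destruct H; subst; simpl; tauto.
Qed.

Close Scope nat_scope.

Open Scope nat_scope.

Definition Rb (p : Z) (n : nat) (x : vtx) : Prop :=
  match x with
  | Sp z => (Z.abs (z - p) <= Z.of_nat n)%Z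
  | Av k _ => exists l, lay k l /\ (Z.abs (Z.of_nat l + 1 - p) + 1 <= Z.of_nat n)%Z
  | Bv k => exists l, lay k l /\ (Z.abs (- (Z.of_nat l + 1) - p) + 1 <= Z.of_nat n)%Z
  end.

Lemma Rb_step p n y z : Rb p n y -> gadj y z -> Rb p (S n) z.
Proof.
  destruct y as [w|k b|k], z as [w'|k' b'|k']; simpl; intros H A; try tauto.
  - lia.
  - destruct A as [l [Hl ->]]. exists l; split; auto; lia.
  - destruct A as [l [Hl ->]]. exists l; split; auto; lia.
  - destruct A as [l [Hl ->]]. destruct H as [l' [Hl' H]].
    rewrite (lay_uniq _ _ _ Hl Hl') . lia.
  - destruct H as [l [Hl H]]. destruct A as [->| ->].
    + destruct (lay_exists (S k)) as [l' Hl']. exists l'; split; auto.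
      destruct (lay_step _ _ _ Hl Hl'); subst; lia.
    + destruct (lay_exists k') as [l' Hl']. exists l'; split; auto.
      destruct (lay_step _ _ _ Hl' Hl); subst; lia.
  - destruct A as [l [Hl ->]]. destruct H as [l' [Hl' H]].
    rewrite (lay_uniq _ _ _ Hl Hl') . lia.
  - destruct H as [l [Hl H]]. destruct A as [->| ->].
    + destruct (lay_exists (S k)) as [l' Hl']. exists l'; split; auto.
      destruct (lay_step _ _ _ Hl Hl'); subst; lia.
    + destruct (lay_exists k') as [l' Hl']. exists l'; split; auto.
      destruct (lay_step _ _ _ Hl' Hl); subst; lia.
Qed.

Lemma walk_Rb p n x : walk gadj n (Sp p) x -> Rb p n x.
Proof.
  intros H. remember (Sp p) as s. induction H; subst.
  - simpl. lia.
  - eapply Rb_step; eauto.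
Qed.

Lemma Rb_mono p n m x : Rb p n x -> n <= m -> Rb p m x.
Proof.
  destruct x; simpl; intros H h.
  - lia.
  - destruct H as [l [Hl H]]; exists l; split; auto; lia.
  - destruct H as [l [Hl H]]; exists l; split; auto; lia.
Qed.

Lemma ball_Rb p n x : ball gadj (Sp p) n x -> Rb p n x.
Proof. intros [k [hk W]]. eapply Rb_mono; [apply walk_Rb; eauto| auto]. Qed.

Definition spineL (c : Z) (n : nat) : list vtx :=
  map (fun i => Sp (c - Z.of_nat n + Z.of_nat i)) (seq 0 (2 * n + 1)).

Lemma spineL_len c n : length (spineL c n) = 2 * n + 1.
Proof. unfold spineL. rewrite length_map, length_seq. auto. Qed.

Lemma spineL_in c n z : (Z.abs (z - c) <= Z.of_nat n)%Z -> In (Sp z) (spineL c n).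
Proof.
  intros H. unfold spineL. apply in_map_iff. exists (Z.to_nat (z - c + Z.of_nat n)).
  split. f_equal. lia. apply in_seq. lia.
Qed.

Definition AL (b : bool) (m : nat) := map (fun k => Av k b) (seq 0 m).
Definition BL (m : nat) := map Bv (seq 0 m).

Lemma AL_in b m k : k < m -> In (Av k b) (AL b m).
Proof. intros. unfold AL. apply in_map_iff. exists k. split; auto. apply in_seq; lia. Qed.
Lemma BL_in m k : k < m -> In (Bv k) (BL m).
Proof. intros. unfold BL. apply in_map_iff. exists k. split; auto. apply in_seq; lia. Qed.
Lemma AL_len b m : length (AL b m) = m.
Proof. unfold AL. rewrite length_map, length_seq. auto. Qed.
Lemma BL_len m : length (BL m) = m.
Proof. unfold BL. rewrite length_map, length_seq. auto. Qed.

Lemma ball1_incl n x : ball gadj (Sp 1) n x ->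
  In x (spineL 1 n ++ AL true (F n) ++ AL false (F n) ++ BL (F n)).
Proof.
  intros H. apply ball_Rb in H. destruct x as [z|k b|k]; simpl in H.
  - apply in_or_app; left. apply spineL_in; auto.
  - destruct H as [l [Hl H]]. assert (k < F n) by (apply (lay_top k l); auto; lia).
    apply in_or_app; right. apply in_or_app. destruct b; [left|right; apply in_or_app; left]; apply AL_in; auto.
  - destruct H as [l [Hl H]]. assert (k < F n) by (apply (lay_top k l); auto; lia).
    do 3 (apply in_or_app; right). apply BL_in; auto.
Qed.

Lemma ballm1_incl n x : ball gadj (Sp (-1)) n x -> (exists z, x = Sp z) \/ (exists b, x = Av 0 b) \/
  (exists k b, x = Av k b /\ k < F (n - 2)) \/ (exists k, x = Bv k).
Proof.
  intros H. apply ball_Rb in H. destruct x as [z|k b|k]; simpl in H.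
  - left; eauto.
  - destruct H as [l [Hl H]]. right; right; left. exists k, b; split; auto.
    apply (lay_top k l); auto; lia.
  - right; right; right; eauto.
Qed.

Lemma ballm1_Sp n z : ball gadj (Sp (-1)) n (Sp z) -> In (Sp z) (spineL (-1) n).
Proof. intros H. apply ball_Rb in H. apply spineL_in. simpl in H. auto. Qed.

Lemma in_ball1_A n k b : k < F n -> ball gadj (Sp 1) n (Av k b).
Proof.
  intros h. destruct (lay_exists k) as [l Hl]. pose proof (lay_lt _ _ _ Hl h).
  exists (S l). split. lia. replace (S l) with (l + 1) by lia.
  eapply walk_app. pose proof (spine_walk 1 (Z.of_nat l + 1)).
  replace (Z.abs_nat (Z.of_nat l + 1 - 1)) with l in H0 by lia. eauto.
  apply walk1. simpl. eauto.
Qed.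

Lemma in_ballm1_B n k : k < F n -> ball gadj (Sp (-1)) n (Bv k).
Proof.
  intros h. destruct (lay_exists k) as [l Hl]. pose proof (lay_lt _ _ _ Hl h).
  exists (S l). split. lia. replace (S l) with (l + 1) by lia.
  eapply walk_app. pose proof (spine_walk (-1) (- (Z.of_nat l + 1))).
  replace (Z.abs_nat (- (Z.of_nat l + 1) - -1)) with l in H0 by lia. eauto.
  apply walk1. simpl. eauto.
Qed.

Close Scope nat_scope.

Open Scope nat_scope.

Lemma card_exists {V} (P : V -> Prop) (L : list V) : (forall y, P y -> In y L) -> exists k, is_card P k.
Proof.
  revert P. induction L as [|a L IH]; intros P H.
  - exists 0, []. split; [constructor|split; auto]. intros y; split; [intros []|intros Hy; apply H in Hy; destruct Hy].
  - destruct (IH (fun y => P y /\ y <> a)) as [k [s [Hn [Hs Hl]]]].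
    { intros y [Py Hy]. destruct (H y Py); subst; tauto. }
    destruct (classic (P a)) as [Pa|nPa].
    + exists (S k), (a :: s). split; [|split].
      * constructor; auto. intros Hin. apply Hs in Hin. tauto.
      * intros y. split. intros [->|Hin]; auto. apply Hs in Hin; tauto.
        intros Py. destruct (classic (y = a)). left; auto. right; apply Hs; auto.
      * simpl; auto.
    + exists k, s. split; [|split]; auto. intros y. rewrite Hs. split. tauto.
      intros Py; split; auto; intros ->; tauto.
Qed.

Lemma card_le {V} (P : V -> Prop) a L : is_card P a -> (forall y, P y -> In y L) -> a <= length L.
Proof.
  intros [s [Hn [Hs Hl]]] H. subst. apply NoDup_incl_length; auto. intros y Hy. apply H, Hs, Hy.
Qed.

Lemma card_ge {V} (P : V -> Prop) a L : is_card P a -> NoDup L -> (forall y, In y L -> P y) -> length L <= a.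
Proof.
  intros [s [Hn [Hs Hl]]] Hd H. subst. apply NoDup_incl_length; auto. intros y Hy. apply Hs, H, Hy.
Qed.

Lemma card_uniq {V} (P : V -> Prop) a b : is_card P a -> is_card P b -> a = b.
Proof.
  intros Ha Hb. destruct Hb as [s [Hn [Hs Hl]]]. subst.
  apply Nat.le_antisymm. apply (card_le P); auto. intros; apply Hs; auto.
  apply (card_ge P); auto. intros; apply Hs; auto.
Qed.

Lemma card_split {V} (P : V -> Prop) (l : V -> bool) a b c : is_card P b ->
  is_card (fun y => P y /\ l y = true) a -> is_card (fun y => P y /\ l y = false) c -> a + c = b.
Proof.
  intros Hb Ha Hc. destruct Hb as [s [Hn [Hs Hl]]]. subst.
  rewrite <- (filter_length l s). f_equal.
  - apply (card_uniq _ _ _ Ha). exists (filter l s). split. apply NoDup_filter; auto.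
    split; auto. intros y. rewrite filter_In, Hs. tauto.
  - apply (card_uniq _ _ _ Hc). exists (filter (fun x => negb (l x)) s). split. apply NoDup_filter; auto.
    split; auto. intros y. rewrite filter_In, Hs. destruct (l y); simpl; intuition congruence.
Qed.

Close Scope nat_scope.

Lemma F_ineq1 n : (4 <= n)%nat -> (n * (2 * n + 1 + F (n - 2)) <= 3 * F n)%nat.
Proof.
  intros h. destruct n as [|[|m]]; try lia. replace (S (S m) - 2)%nat with m by lia.
  rewrite !F_S. assert (1 <= F m)%nat. { destruct m. lia. rewrite F_S. nia. }
  nia.
Qed.

Lemma F_ineq2 n : (4 <= n)%nat -> (2 * n + 1 <= F n)%nat.
Proof.
  intros h. destruct n as [|[|m]]; try lia.
  rewrite !F_S. assert (1 <= F m)%nat. { destruct m. lia. rewrite F_S. nia. }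
  nia.
Qed.

Lemma F_pos n : (1 <= n)%nat -> (1 <= F n)%nat.
Proof. intros h. destruct n. lia. rewrite F_S. nia. Qed.

Lemma cv_zero_bound (u : nat -> R) (C : R) (N : nat) :
  (forall n, (N <= n)%nat -> 0 <= u n /\ u n * INR n <= C) -> Un_cv u 0.
Proof.
  intros H eps Heps.
  destruct (archimed (C / eps)) as [H1 _].
  set (M := Z.to_nat (up (C / eps))).
  exists (max N (S M)). intros n Hn. unfold Rdist. rewrite Rminus_0_r.
  destruct (H n ltac:(lia)) as [h0 h1]. rewrite Rabs_right by lra.
  assert (INR n > C / eps).
  { assert (INR n >= INR (S M)) by (apply Rle_ge, le_INR; lia).
    rewrite S_INR in H0. unfold M in H0.
    destruct (Z_lt_le_dec (up (C/eps)) 0).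
    - assert (0 <= INR n) by apply pos_INR. assert (IZR (up (C/eps)) <= -1).
      { apply IZR_le. lia. } lra.
    - rewrite (INR_IZR_INZ (Z.to_nat _)) in H0. rewrite Z2Nat.id in H0 by lia. lra. }
  assert (0 < INR n). { assert (0 <= C). { apply Rle_trans with (u n * INR n); auto.
    apply Rmult_le_pos; auto. apply pos_INR. } 
    assert (0 <= C / eps) by (apply Rmult_le_pos; [lra| apply Rlt_le, Rinv_0_lt_compat; lra]). lra. }
  apply Rmult_lt_reg_r with (INR n); auto.
  apply Rle_lt_trans with C; auto.
  apply Rmult_gt_reg_l with (/ eps). apply Rinv_0_lt_compat; lra.
  replace (/ eps * (eps * INR n)) with (INR n) by (field; lra). unfold Rdiv in H0. lra.
Qed.

Lemma cv_ge (u : nat -> R) d c N : Un_cv u d -> (forall n, (N <= n)%nat -> c <= u n) -> c <= d.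
Proof.
  intros Hu H. destruct (Rle_or_lt c d); auto.
  destruct (Hu (c - d)) as [M HM]. lra.
  specialize (HM (max N M) ltac:(lia)). specialize (H (max N M) ltac:(lia)).
  unfold Rdist in HM. apply Rabs_def2 in HM. lra.
Qed.

Lemma cv_one_minus (u : nat -> R) : Un_cv u 0 -> Un_cv (fun n => 1 - u n) 1.
Proof.
  intros Hu eps He. destruct (Hu eps He) as [N HN]. exists N. intros n Hn.
  specialize (HN n Hn). unfold Rdist in *. replace (1 - u n - 1) with (- (u n - 0)) by ring.
  rewrite Rabs_Ropp; auto.
Qed.

Open Scope nat_scope.

Definition l0 (x : vtx) : bool :=
  match x with Sp z => (z <=? 0)%Z | Av _ b => b | Bv _ => false end.

Section Rigid.
Variable g : vtx -> vtx.
Hypothesis Ha : automorphism gadj g.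
Hypothesis Hc : forall x, l0 (g x) = l0 x.

Lemma g_inj x y : g x = g y -> x = y.
Proof. apply Ha. Qed.
Lemma g_adj x y : gadj x y -> gadj (g x) (g y).
Proof. apply Ha. Qed.
Lemma g_adj_inv x y : gadj (g x) (g y) -> gadj x y.
Proof. apply Ha. Qed.

Lemma fixby (Q : vtx -> Prop) z : (forall w, Q w -> w = z \/ g w = w) -> Q (g z) -> g z = z.
Proof.
  intros H Hq. destruct (H _ Hq) as [h|h]; auto. apply g_inj; auto.
Qed.

Definition Pb (x : vtx) := l0 x = false /\ forall y z w, gadj x y -> gadj x z -> gadj x w -> y = z \/ y = w \/ z = w.

Lemma Pb_pres x : Pb x -> Pb (g x).
Proof.
  intros [h1 h2]. split. rewrite Hc; auto.
  intros y z w A1 A2 A3.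
  destruct Ha as [_ [Hs _]].
  destruct (Hs y) as [y' <-], (Hs z) as [z' <-], (Hs w) as [w' <-].
  apply g_adj_inv in A1, A2, A3.
  destruct (h2 _ _ _ A1 A2 A3) as [->|[->| ->]]; auto.
Qed.

Ltac vsolve := first [ left; reflexivity | right; reflexivity | right; left; reflexivity | right; right; reflexivity | idtac ].

Lemma Pb_B0 : Pb (Bv 0).
Proof.
  split; auto. 
  assert (forall y, gadj (Bv 0) y -> y = Bv 1 \/ y = Sp (-1)) as N.
  { intros [z|k b|k]; simpl; intros H; try tauto.
    - destruct H as [l [Hl ->]]. rewrite (lay_uniq _ _ _ Hl lay_0). right. f_equal.
    - left. f_equal; lia. }
  intros y z w A1 A2 A3.
  destruct (N _ A1) as [->| ->], (N _ A2) as [->| ->], (N _ A3) as [->| ->]; auto.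
Qed.

Lemma Pb_uniq x : Pb x -> x = Bv 0.
Proof.
  intros [h1 h2]. destruct x as [z|k b|k]; simpl in h1.
  - assert (1 <= z)%Z by lia.
    set (l := Z.to_nat (z - 1)).
    assert (A : gadj (Sp z) (Av (F l) true)). { simpl. exists l. split. apply lay_first. unfold l; lia. }
    assert (B1 : gadj (Sp z) (Sp (z+1))) by (simpl; lia).
    assert (B2 : gadj (Sp z) (Sp (z-1))) by (simpl; lia).
    destruct (h2 _ _ _ B1 B2 A) as [e|[e|e]]; try discriminate. injection e; lia.
  - subst b. destruct (lay_exists k) as [l Hl].
    assert (A : gadj (Av k false) (Sp (Z.of_nat l + 1))). { simpl. eauto. }
    assert (B1 : gadj (Av k false) (Av (S k) true)) by (simpl; lia).
    assert (B2 : gadj (Av k false) (Av (S k) false)) by (simpl; lia).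
    destruct (h2 _ _ _ B1 B2 A) as [e|[e|e]]; discriminate.
  - destruct k; auto. destruct (lay_exists (S k)) as [l Hl].
    assert (A : gadj (Bv (S k)) (Sp (- (Z.of_nat l + 1)))). { simpl. eauto. }
    assert (B1 : gadj (Bv (S k)) (Bv (S (S k)))) by (simpl; lia).
    assert (B2 : gadj (Bv (S k)) (Bv k)) by (simpl; lia).
    destruct (h2 _ _ _ B1 B2 A) as [e|[e|e]]; try discriminate. injection e; lia.
Qed.

Lemma fixB0 : g (Bv 0) = Bv 0.
Proof. apply Pb_uniq, Pb_pres, Pb_B0. Qed.

Lemma fixB k : g (Bv k) = Bv k /\ g (Bv (S k)) = Bv (S k).
Proof.
  induction k.
  - split. apply fixB0. apply (fixby (fun w => gadj (Bv 0) w /\ l0 w = false)).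
    + intros [z|j b|j] [A C]; simpl in A, C; try tauto.
      * destruct A as [l [_ ->]]. destruct (Z.leb_spec (- (Z.of_nat l + 1)) 0); [discriminate|lia].
      * left. f_equal. lia.
    + split; [|apply Hc]. rewrite <- fixB0. apply g_adj. simpl; lia.
  - destruct IHk as [h1 h2]. split; auto.
    apply (fixby (fun w => gadj (Bv (S k)) w /\ l0 w = false)).
    + intros [z|j b|j] [A C]; simpl in A, C; try tauto.
      * destruct A as [l [_ ->]]. destruct (Z.leb_spec (- (Z.of_nat l + 1)) 0); [discriminate|lia].
      * destruct A as [->|e]. auto. injection e as ->. right; auto.
    + split; [|apply Hc]. rewrite <- h2. apply g_adj. simpl; lia.
Qed.

Lemma fixSneg z : (z <= -1)%Z -> g (Sp z) = Sp z.
Proof.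
  intros hz. set (l := Z.to_nat (- z - 1)).
  assert (A : gadj (Bv (F l)) (Sp z)). { simpl. exists l. split. apply lay_first. unfold l; lia. }
  apply (fixby (fun w => gadj (Bv (F l)) w /\ l0 w = true)).
  - intros [z'|j b|j] [A' C]; simpl in A', C; try tauto; try discriminate.
    destruct A' as [l' [Hl' ->]]. rewrite (lay_uniq _ _ _ Hl' (lay_first l)). left. f_equal. unfold l; lia.
  - split. rewrite <- (proj1 (fixB (F l))). apply g_adj; auto. rewrite Hc. simpl. apply Z.leb_le. lia.
Qed.

Lemma fixS0 : g (Sp 0) = Sp 0.
Proof.
  apply (fixby (fun w => gadj (Sp (-1)) w /\ l0 w = true)).
  - intros [z'|j b|j] [A' C]; simpl in A', C; try tauto; try discriminate.
    + destruct A' as [e|e]. left; f_equal; lia. right. apply fixSneg. lia.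
    + destruct A' as [l [_ e]]. lia.
  - split. rewrite <- (fixSneg (-1)) by lia. apply g_adj. simpl; lia. rewrite Hc; auto.
Qed.

Lemma fixS1 : g (Sp 1) = Sp 1.
Proof.
  apply (fixby (fun w => gadj (Sp 0) w /\ l0 w = false)).
  - intros [z'|j b|j] [A' C]; simpl in A', C; try tauto; try discriminate.
    + destruct A' as [e|e]. left; f_equal; lia. subst. simpl in C. 
      destruct (Z.leb_spec z' 0); [discriminate|lia].
    + destruct A' as [l [_ e]]. lia.
    + destruct A' as [l [_ e]]. lia.
  - split. rewrite <- fixS0. apply g_adj. simpl; lia. rewrite Hc; auto.
Qed.

Lemma fixA0 : g (Av 0 true) = Av 0 true.
Proof.
  apply (fixby (fun w => gadj (Sp 1) w /\ l0 w = true)).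
  - intros [z'|j b|j] [A' C]; simpl in A', C; try tauto; try discriminate.
    + destruct A' as [e|e]. subst; simpl in C; discriminate. right. replace z' with 0%Z by lia. apply fixS0.
    + destruct A' as [l [Hl e]]. assert (l = 0) by lia. subst. apply lay0_inv in Hl. subst. left; auto.
  - split. rewrite <- fixS1. apply g_adj. simpl. exists 0. split. apply lay_0. lia. rewrite Hc; auto.
Qed.

Lemma fixAt k : g (Av k true) = Av k true /\ g (Av (S k) true) = Av (S k) true.
Proof.
  induction k.
  - split. apply fixA0. apply (fixby (fun w => gadj (Av 0 true) w /\ l0 w = true)).
    + intros [z|j b|j] [A C]; simpl in A, C; try tauto.
      * destruct A as [l [_ ->]]. destruct (Z.leb_spec (Z.of_nat l + 1) 0); [lia|discriminate].
      * subst. left. f_equal. lia.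
    + split; [|apply Hc]. rewrite <- fixA0. apply g_adj. simpl; lia.
  - destruct IHk as [h1 h2]. split; auto.
    apply (fixby (fun w => gadj (Av (S k) true) w /\ l0 w = true)).
    + intros [z|j b|j] [A C]; simpl in A, C; try tauto.
      * destruct A as [l [_ ->]]. destruct (Z.leb_spec (Z.of_nat l + 1) 0); [lia|discriminate].
      * subst. destruct A as [->|e]. auto. injection e as ->. right; auto.
    + split; [|apply Hc]. rewrite <- h2. apply g_adj. simpl; lia.
Qed.

Lemma fixSpos z : (1 <= z)%Z -> g (Sp z) = Sp z.
Proof.
  intros hz. destruct (Z.eq_dec z 1) as [->|ne]. apply fixS1.
  set (l := Z.to_nat (z - 1)). assert (1 <= l) by (unfold l; lia).
  apply (fixby (fun w => gadj (Av (F l) true) w /\ gadj (Av (S (F l)) true) w)).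
  - intros [z'|j b|j] [A1 A2]; simpl in A1, A2; try tauto.
    + destruct A1 as [l' [Hl' ->]]. rewrite (lay_uniq _ _ _ Hl' (lay_first l)). left. f_equal. unfold l; lia.
    + lia.
  - split.
    + rewrite <- (proj1 (fixAt (F l))). apply g_adj. simpl. exists l. split. apply lay_first. unfold l; lia.
    + rewrite <- (proj1 (fixAt (S (F l)))). apply g_adj. simpl. exists l. split. apply lay_second; auto. unfold l; lia.
Qed.

Lemma fixS z : g (Sp z) = Sp z.
Proof. destruct (Z_le_gt_dec z 0). destruct (Z.eq_dec z 0). subst; apply fixS0. apply fixSneg; lia. apply fixSpos; lia. Qed.

Lemma fixAf1 j : g (Av (S j) false) = Av (S j) false.
Proof.
  apply (fixby (fun w => gadj (Av j true) w /\ gadj (Av (S (S j)) true) w /\ l0 w = false)).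
  - intros [z'|i b|i] [A1 [A2 C]]; simpl in A1, A2, C; try tauto.
    + right; apply fixS.
    + subst. left. f_equal. lia.
  - split; [|split].
    + rewrite <- (proj1 (fixAt j)). apply g_adj. simpl; lia.
    + rewrite <- (proj1 (fixAt (S (S j)))). apply g_adj. simpl; lia.
    + rewrite Hc; auto.
Qed.

Lemma fixAf0 : g (Av 0 false) = Av 0 false.
Proof.
  apply (fixby (fun w => gadj (Av 1 true) w /\ l0 w = false)).
  - intros [z'|i b|i] [A1 C]; simpl in A1, C; try tauto.
    + right; apply fixS.
    + subst. destruct A1 as [->|e]. right; apply fixAf1. left; f_equal; lia.
  - split. rewrite <- (proj1 (fixAt 1)). apply g_adj. simpl; lia. rewrite Hc; auto.
Qed.

Lemma rigid x : g x = x.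
Proof.
  destruct x as [z|[|k] []|k]. apply fixS. apply fixA0. apply fixAf0.
  apply (proj1 (fixAt _)). apply fixAf1. apply (proj1 (fixB _)).
Qed.
End Rigid.

Lemma l0_dist : distinguishing gadj l0.
Proof. intros g Ha Hc x. apply (rigid g Ha Hc). Qed.

Definition swp (k : nat) (x : vtx) : vtx :=
  match x with Av j b => if Nat.eqb j k then Av j (negb b) else Av j b | _ => x end.

Lemma swp_inv k x : swp k (swp k x) = x.
Proof. destruct x; simpl; auto. destruct (Nat.eqb k0 k) eqn:E; simpl; rewrite E; auto. rewrite Bool.negb_involutive; auto. Qed.

Lemma swp_auto k : automorphism gadj (swp k).
Proof.
  split; [|split].
  - intros x y H. rewrite <- (swp_inv k x), <- (swp_inv k y), H. auto.
  - intros y. exists (swp k y). apply swp_inv.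
  - intros x y. destruct x, y; simpl; repeat (destruct (Nat.eqb _ _)); simpl; tauto.
Qed.

Lemma forced l : distinguishing gadj l -> forall k, l (Av k true) <> l (Av k false).
Proof.
  intros D k E. assert (swp k (Av k true) = Av k true).
  { apply D. apply swp_auto. intros [z|j b|j]; simpl; auto.
    destruct (Nat.eqb_spec j k); subst; auto. destruct b; simpl; auto. }
  simpl in H. rewrite Nat.eqb_refl in H. discriminate.
Qed.

Close Scope nat_scope.

Lemma fun_choice (P : nat -> nat -> Prop) : (forall n, exists k, P n k) -> exists f, forall n, P n (f n).
Proof.
  intros H. exists (fun n => proj1_sig (constructive_indefinite_description _ (H n))).
  intros n. apply proj2_sig.
Qed.

Lemma Un_cv_ext (u v : nat -> R) l : (forall n, u n = v n) -> Un_cv u l -> Un_cv v l.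
Proof. intros E H eps He. destruct (H eps He) as [N HN]. exists N. intros n Hn. rewrite <- E. auto. Qed.

Lemma ball_fin p n : exists L, forall x, ball gadj (Sp p) n x -> In x L.
Proof.
  set (N := (n + Z.abs_nat p)%nat).
  exists (spineL p n ++ AL true (F N) ++ AL false (F N) ++ BL (F N)).
  intros x H. apply ball_Rb in H. destruct x as [z|k b|k]; simpl in H.
  - apply in_or_app; left. apply spineL_in; auto.
  - destruct H as [l [Hl H]]. assert (k < F N)%nat by (apply (lay_top k l); auto; unfold N; lia).
    apply in_or_app; right. apply in_or_app. destruct b; [left|right; apply in_or_app; left]; apply AL_in; auto.
  - destruct H as [l [Hl H]]. assert (k < F N)%nat by (apply (lay_top k l); auto; unfold N; lia).
    do 3 (apply in_or_app; right). apply BL_in; auto.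
Qed.

Lemma card_ball p (W : vtx -> Prop) : exists f, forall n, is_card (fun y => ball gadj (Sp p) n y /\ W y) (f n).
Proof.
  apply (fun_choice (fun n k => is_card (fun y => ball gadj (Sp p) n y /\ W y) k)). intros n. destruct (ball_fin p n) as [L HL].
  apply (card_exists _ L). intros y [Hy _]; auto.
Qed.

Lemma card_ball0 p : exists f, forall n, is_card (ball gadj (Sp p) n) (f n).
Proof.
  apply (fun_choice (fun n k => is_card (ball gadj (Sp p) n) k)). intros n. destruct (ball_fin p n) as [L HL].
  apply (card_exists _ L). auto.
Qed.

Lemma nodup_BL m : NoDup (BL m).
Proof. unfold BL. apply Injective_map_NoDup. intros a b H; injection H; auto. apply seq_NoDup. Qed.

Lemma blue_bound n a : (4 <= n)%nat ->
  is_card (fun y => ball gadj (Sp (-1)) n y /\ l0 y = true) a -> (a <= 2 * n + 1 + F (n - 2))%nat.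
Proof.
  intros h Ha. rewrite <- (spineL_len (-1) n), <- (AL_len true (F (n - 2))), <- length_app.
  apply (card_le _ _ _ Ha). intros y [Hb Hc]. apply ball_Rb in Hb. destruct y as [z|k b|k]; simpl in Hb, Hc.
  - apply in_or_app; left. apply spineL_in; auto.
  - subst. destruct Hb as [l [Hl H]]. apply in_or_app; right. apply AL_in. apply (lay_top k l); auto; lia.
  - discriminate.
Qed.

Lemma ballm1_lower n b : is_card (ball gadj (Sp (-1)) n) b -> (F n <= b)%nat.
Proof.
  intros Hb. rewrite <- (BL_len (F n)). apply (card_ge _ _ _ Hb). apply nodup_BL.
  intros y Hy. unfold BL in Hy. apply in_map_iff in Hy. destruct Hy as [k [<- Hk]]. apply in_seq in Hk.
  apply in_ballm1_B. lia.
Qed.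

Lemma dens_v : coloring_density_zero_at gadj (Sp (-1)) l0.
Proof.
  destruct (card_ball0 (-1)) as [b Hb].
  destruct (card_ball (-1) (blue_class l0)) as [a Ha].
  destruct (card_ball (-1) (red_class l0)) as [c Hc].
  assert (Hu : Un_cv (fun n => INR (a n) / INR (b n)) 0).
  { apply (cv_zero_bound _ 3 4). intros n hn.
    pose proof (blue_bound n (a n) hn (Ha n)). pose proof (ballm1_lower n (b n) (Hb n)).
    pose proof (F_ineq1 n hn). pose proof (F_pos n ltac:(lia)).
    assert (0 < INR (b n)) by (apply lt_0_INR; lia).
    split. apply Rmult_le_pos. apply pos_INR. left; apply Rinv_0_lt_compat; auto.
    assert (INR (a n) * INR n <= 3 * INR (b n)).
    { rewrite <- mult_INR. replace 3 with (INR 3) by (simpl; ring). rewrite <- mult_INR. apply le_INR. nia. }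
    unfold Rdiv. replace (INR (a n) * / INR (b n) * INR n) with ((INR (a n) * INR n) / INR (b n)) by (field; lra).
    apply Rmult_le_reg_r with (INR (b n)); auto. unfold Rdiv. rewrite Rmult_assoc, Rinv_l; lra. }
  exists 0, 1. split; [|split].
  - exists a, b. split; [|split]; auto.
  - exists c, b. split; [|split]; auto.
    apply (Un_cv_ext (fun n => 1 - INR (a n) / INR (b n))). 2: apply cv_one_minus; auto.
    intros n. pose proof (card_split _ l0 _ _ _ (Hb n) (Ha n) (Hc n)).
    assert (1 <= b n)%nat. { destruct n. pose proof (card_ge _ _ [Sp (-1)] (Hb 0%nat)). simpl in H0.
       assert (1 <= b 0%nat)%nat; [|lia]. apply H0. repeat constructor; auto. intros y [<-|[]]. exists 0%nat. split; auto. constructor.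
       pose proof (ballm1_lower _ _ (Hb (S n))). pose proof (F_pos (S n)). lia. }
    assert (0 < INR (b n)) by (apply lt_0_INR; lia).
    replace (b n) with (a n + c n)%nat by lia. rewrite plus_INR. field. rewrite <- plus_INR. replace (a n + c n)%nat with (b n) by lia. lra.
  - unfold Rmin. destruct (Rle_dec 0 1); lra.
Qed.

Lemma dens_v' (l : vtx -> bool) (cb : bool) d : distinguishing gadj l ->
  density_at gadj (Sp 1) (fun y => l y = cb) d -> 1/4 <= d.
Proof.
  intros D [a [b [Hb [Ha Hu]]]].
  apply (cv_ge _ _ _ 4 Hu). intros n hn.
  assert (Hup : (b n <= 2 * n + 1 + 3 * F n)%nat).
  { replace (2 * n + 1 + 3 * F n)%nat with (length (spineL 1 n ++ AL true (F n) ++ AL false (F n) ++ BL (F n))).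
    apply (card_le _ _ _ (Hb n)). apply ball1_incl.
    rewrite !length_app, spineL_len, !AL_len, BL_len. lia. }
  set (f := fun k => if Bool.eqb (l (Av k true)) cb then Av k true else Av k false).
  assert (Hlo : (F n <= a n)%nat).
  { replace (F n) with (length (map f (seq 0 (F n)))) by (rewrite length_map, length_seq; auto).
    apply (card_ge _ _ _ (Ha n)).
    - apply Injective_map_NoDup. intros x y E. unfold f in E.
      destruct (Bool.eqb (l (Av x true)) cb), (Bool.eqb (l (Av y true)) cb); injection E; auto.
      apply seq_NoDup.
    - intros y Hy. apply in_map_iff in Hy. destruct Hy as [k [<- Hk]]. apply in_seq in Hk.
      unfold f. pose proof (forced l D k). destruct (Bool.eqb_spec (l (Av k true)) cb).
      + split; auto. apply in_ball1_A; lia.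
      + split. apply in_ball1_A; lia. destruct (l (Av k true)), (l (Av k false)), cb; congruence. }
  pose proof (F_ineq2 n hn).
  assert (0 < INR (b n)). { apply lt_0_INR. pose proof (card_ge _ _ [Sp 1] (Hb n)). simpl in H0.
    apply H0. repeat constructor; auto. intros y [<-|[]]. exists 0%nat. split. lia. constructor. }
  assert (INR (b n) <= 4 * INR (a n)).
  { replace 4 with (INR 4) by (simpl; ring). rewrite <- mult_INR. apply le_INR. lia. }
  apply Rmult_le_reg_r with (INR (b n)); auto. replace (INR (a n) / INR (b n) * INR (b n)) with (INR (a n)) by (field; lra). lra.
Qed.

Theorem mainTheorem2 :
  exists (V : Type) (adj : V -> V -> Prop),
    simple_graph adj /\ countable_vertices (V:=V) /\ connected adj /\ locally_finite adj /\
    (exists v : V, has_2dist_density_zero_at adj v) /\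
    ~ has_2dist_density_zero adj /\
    (exists v' : V, forall l : V -> bool,
        distinguishing adj l -> ~ coloring_density_zero_at adj v' l).
Proof.
  exists vtx, gadj. split; [apply g_simple|]. split; [apply g_countable|].
  split; [apply g_connected|]. split; [apply g_locfin|]. split.
  { exists (Sp (-1)), l0. split. apply l0_dist. apply dens_v. }
  split.
  - intros [l [D [s1 [s2 [[H1e H1l] [[H2e H2l] Hm]]]]]].
    destruct (H1e (Sp 1)) as [d1 Hd1]. destruct (H2e (Sp 1)) as [d2 Hd2].
    pose proof (dens_v' l true d1 D Hd1). pose proof (dens_v' l false d2 D Hd2).
    assert (d1 <= s1) by (apply (proj1 H1l); exists (Sp 1); auto).
    assert (d2 <= s2) by (apply (proj1 H2l); exists (Sp 1); auto).
    unfold Rmin in Hm. destruct (Rle_dec s1 s2); lra.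
  - exists (Sp 1). intros l D [d1 [d2 [Hd1 [Hd2 Hm]]]].
    pose proof (dens_v' l true d1 D Hd1). pose proof (dens_v' l false d2 D Hd2).
    unfold Rmin in Hm. destruct (Rle_dec d1 d2); lra.
Qed.
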